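(* Let $X$ be a separable Banach space over $\mathbb{K}\in\{\mathbb{R},\mathbb{C}\}$ and $T\colon X\to X$ a bounded linear operator. If $T$ is densely uniformly Li-Yorke chaotic, then $T$ admits a dense irregular manifold.
   Context: A subset $S\subset X$ with at least two points is uniformly Li-Yorke scrambled for $T$ if there exist sequences $\{p_n\}$, $\{q_n\}$ in $\mathbb{N}$ such that for all distinct $x,y\in S$: $\lim_n\|T^{p_n}x-T^{p_n}y\|=0$ and $\lim_n\|T^{q_n}x-T^{q_n}y\|=\infty$; $T$ is densely uniformly Li-Yorke chaotic if there is a dense, uncountable such set. A vector $x$ is irregular for $T$ if $\liminf_n\|T^nx\|=0$ and $\limsup_n\|T^nx\|=\infty$. An irregular manifold is a vector subspace $Y\subset X$ every non-zero vector of which is irregular for $T$. *)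

(* Defs.v *)
From HB Require Import structures.
From mathcomp Require Import all_boot all_order all_algebra.
From mathcomp Require Import all_classical all_reals all_analysis.
From mathcomp Require Import complex.

Set Implicit Arguments.
Unset Strict Implicit.
Unset Printing Implicit Defensive.

Import Order.TTheory GRing.Theory Num.Theory.
Import numFieldNormedType.Exports.
Local Open Scope classical_set_scope.
Local Open Scope ring_scope.

Inductive scalar_kind := RealScalars | ComplexScalars.

Definition scalars (R : realType) (k : scalar_kind) : numFieldType :=
  match k with
  | RealScalars => (R : numFieldType)
  | ComplexScalars => ((complex R) : numFieldType)
  end.

Section Defs.
Context (K : numFieldType) (X : normedModType K).

Definition separable_space : Prop :=
  exists D : set X, countable D /\ dense D.

Definition unif_LY_scrambled (T : X -> X) (S : set X) : Prop :=
  (exists x y, S x /\ S y /\ x <> y) /\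
  exists p q : nat -> nat,
    forall x y, S x -> S y -> x <> y ->
      ((fun n => `|iter (p n) T x - iter (p n) T y|) @ \oo --> (0 : K)) /\
      ((fun n => `|iter (q n) T x - iter (q n) T y|) @ \oo --> +oo_K).

Definition densely_unif_LY_chaotic (T : X -> X) : Prop :=
  exists S : set X, dense S /\ ~ countable S /\ unif_LY_scrambled T S.

(* x is irregular: liminf_n ||T^n x|| = 0 and limsup_n ||T^n x|| = +oo,
   written out for the nonnegative sequence ||T^n x||. *)
Definition irregular (T : X -> X) (x : X) : Prop :=
  (forall e : K, 0 < e -> forall N : nat,
      exists2 n : nat, (N <= n)%N & `|iter n T x| < e) /\
  (forall M : K, M \is Num.real -> forall N : nat,
      exists2 n : nat, (N <= n)%N & M < `|iter n T x|).

Definition vector_subspace (Y : set X) : Prop :=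
  Y 0 /\ forall (a : K) (u v : X), Y u -> Y v -> Y (a *: u + v).

Definition irregular_manifold (T : X -> X) (Y : set X) : Prop :=
  vector_subspace Y /\ forall x, Y x -> x <> 0 -> irregular T x.

End Defs.

(* Main.v *)
Require Import Defs.
From HB Require Import structures.
From mathcomp Require Import all_boot all_order all_algebra.
From mathcomp Require Import all_classical all_reals all_analysis.
From mathcomp Require Import complex.
From mathcomp Require Import ring.
Import Order.TTheory GRing.Theory Num.Theory.
Import numFieldNormedType.Exports.
Local Open Scope classical_set_scope.
Local Open Scope ring_scope.
Section Core.
Variables (K : numFieldType) (X : completeNormedModType K) (T : {linear X -> X}).
Variable c : K.
Hypothesis c_ge0 : 0 <= c.
Hypothesis Tb : forall x, `|T x| <= c * `|x|.

Lemma iterL n (a : K) u v : iter n T (a *: u + v) = a *: iter n T u + iter n T v.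
Proof. elim: n => [//|n IH]; by rewrite !iterS IH linearP. Qed.

Lemma iter0 n : iter n T 0 = 0.
Proof. elim: n => [//|n IH]; by rewrite iterS IH linear0. Qed.

Lemma iterD' n u v : iter n T (u + v) = iter n T u + iter n T v.
Proof. by have := iterL n 1 u v; rewrite !scale1r. Qed.

Lemma iterZ n (a : K) u : iter n T (a *: u) = a *: iter n T u.
Proof. by have := iterL n a u 0; rewrite !addr0 iter0 addr0. Qed.

Lemma iterN n u : iter n T (- u) = - iter n T u.
Proof. by rewrite -scaleN1r iterZ scaleN1r. Qed.

Lemma iterB n u v : iter n T (u - v) = iter n T u - iter n T v.
Proof. by rewrite iterD' iterN. Qed.

Lemma iter_sum n (I : Type) (r : seq I) (P : pred I) (F : I -> X) :
  iter n T (\sum_(i <- r | P i) F i) = \sum_(i <- r | P i) iter n T (F i).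
Proof.
exact: (big_morph _ (iterD' n) (iter0 n)).
Qed.

Lemma iter_bound n x : `|iter n T x| <= c ^+ n * `|x|.
Proof.
elim: n => [|n IH]; first by rewrite expr0 mul1r.
rewrite iterS exprSr -mulrA (le_trans (Tb _)) //.
by rewrite mulrCA ler_wpM2l.
Qed.

Variable p : nat -> nat.

Definition Cset (z : X) := forall e : K, 0 < e ->
  exists N, forall n, (N <= n)%N -> `|iter (p n) T z| < e.

Lemma C0 : Cset 0.
Proof. by move=> e e0; exists 0%N => n _; rewrite iter0 normr0. Qed.

Lemma pos_div_mul (a e : K) : 0 <= a -> 0 < e -> (a + 1) * (e / (a + 1)) = e.
Proof.
move=> a0 e0; rewrite mulrCA mulfV ?mulr1 //.
by rewrite gt_eqF // ltr_wpDl.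
Qed.

Lemma C_lin (a : K) u v : Cset u -> Cset v -> Cset (a *: u + v).
Proof.
move=> Cu Cv e e0.
have a1 : 0 < `|a| + 1 by rewrite ltr_wpDl.
have e1 : 0 < e / (`|a| + 1) by rewrite divr_gt0.
have [N1 H1] := Cu _ e1; have [N2 H2] := Cv _ e1.
exists (maxn N1 N2) => n hn.
rewrite iterL (le_lt_trans (ler_normD _ _)) // normrZ.
rewrite -[X in _ < X](@pos_div_mul `|a| e (normr_ge0 a) e0) mulrDl mul1r.
apply: ler_ltD.
  apply: ler_wpM2l => //; apply/ltW/H1.
  by apply: leq_trans hn; rewrite leq_maxl.
by apply: H2; apply: leq_trans hn; rewrite leq_maxr.
Qed.

Lemma iter_comm m n u : iter m T (iter n T u) = iter n T (iter m T u).
Proof. by rewrite -!iterD addnC. Qed.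

Lemma C_iter j u : Cset u -> Cset (iter j T u).
Proof.
move=> Cu e e0.
have a1 : 0 <= c ^+ j by rewrite exprn_ge0.
have e1 : 0 < e / (c ^+ j + 1) by rewrite divr_gt0 // ltr_wpDl.
have [N1 H1] := Cu _ e1.
exists N1 => n hn; rewrite iter_comm (le_lt_trans (iter_bound _ _)) //.
rewrite -[X in _ < X](@pos_div_mul _ e a1 e0) mulrDl mul1r.
rewrite ltr_pwDr //.
by apply: ler_wpM2l => //; apply/ltW/H1.
Qed.

Lemma C_seq (H : seq X) : (forall h, h \in H -> Cset h) ->
  forall e : K, 0 < e -> exists N, forall n, (N <= n)%N ->
    forall h, h \in H -> `|iter (p n) T h| < e.
Proof.
elim: H => [_ e e0|h H IH hC e e0]; first by exists 0%N.
have [N1 H1] := hC h (mem_head _ _) e e0.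
have [N2 H2] := IH (fun h' hh' => hC h' (mem_behead (s := h :: H) hh')) e e0.
exists (maxn N1 N2) => n hn h'; rewrite in_cons => /orP [/eqP ->|hh'].
  by apply: H1; apply: leq_trans hn; rewrite leq_maxl.
by apply: H2 => //; apply: leq_trans hn; rewrite leq_maxr.
Qed.

Variable z0 : X.
Hypothesis Cz0 : Cset z0.
Hypothesis z0unb : forall M : K, M \is Num.real -> exists n, M < `|iter n T z0|.

Definition Msum (H : seq X) r := \sum_(h <- H) `|iter r T h|.

Lemma Msum_ge0 H r : 0 <= Msum H r.
Proof. by apply: sumr_ge0 => h _. Qed.

Lemma sum_term_le (F : nat -> K) n i : (forall k, 0 <= F k) -> (i < n)%N ->
  F i <= \sum_(k < n) F k.
Proof.
move=> F0 iN; rewrite (bigD1 (Ordinal iN)) //= lerDl.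
by apply: sumr_ge0 => k _.
Qed.

Lemma sum_const_seq (H : seq X) (a : K) : \sum_(h <- H) a = a *+ size H.
Proof. elim: H => [|h H IH]; by rewrite ?big_nil ?big_cons ?IH ?mulrS. Qed.

Lemma RL (H : seq X) : (forall h, h \in H -> Cset h) ->
  forall L eta : K, 0 < L -> 0 < eta ->
  exists r g, [/\ Cset g, `|g| <= eta & L * (1 + Msum H r) <= `|iter r T g|].
Proof.
move=> HC L eta L0 eta0; apply: contrapT => Hn.
set k0 := L / eta.
have k00 : 0 < k0 by rewrite divr_gt0.
have dom : forall r x, Cset x -> `|iter r T x| <= k0 * `|x| * (1 + Msum H r).
  move=> r x Cx.
  have [->|x0] := eqVneq x 0.
    by rewrite iter0 !normr0 mulr0 mul0r.
  have nx0 : 0 < `|x| by rewrite normr_gt0.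
  pose g := (eta / `|x|) *: x.
  have Cg : Cset g by have := @C_lin (eta / `|x|) x 0 Cx C0; rewrite addr0.
  have ng : `|g| = eta by rewrite normrZ ger0_norm ?divr_ge0 ?ltW // -mulrA mulVf ?mulr1 // gt_eqF.
  have lt : `|iter r T g| < L * (1 + Msum H r).
    rewrite real_ltNge ?normr_real //; last first.
      by apply: ger0_real; apply: mulr_ge0; [exact: ltW | apply: addr_ge0; [exact: ler01 | exact: Msum_ge0]].
    apply/negP => hle; apply: Hn; exists r, g; split => //; by rewrite ng.
  have -> : `|iter r T x| = (`|x| / eta) * `|iter r T g|.
    rewrite /g iterZ normrZ ger0_norm ?divr_ge0 ?ltW // mulrA.
    have -> : `|x| / eta * (eta / `|x|) = 1.
      by rewrite mulrA -[_ / eta * eta]mulrA mulVf ?gt_eqF // mulr1 mulfV ?gt_eqF.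
    by rewrite mul1r.
  apply: le_trans; first by apply: (ler_wpM2l _ (ltW lt)); rewrite divr_ge0 ?ltW.
  rewrite /k0 le_eqVlt; apply/orP; left; apply/eqP; ring.
set n := size H.
set e := (2 * k0 * (n.+1)%:R)^-1.
have e0 : 0 < e.
  by rewrite invr_gt0; apply: mulr_gt0; [apply: mulr_gt0 | rewrite ltr0n].

have HC1 : forall h, h \in map (iter 1 T) H -> Cset h.
  by move=> h /mapP [h1 h1H ->]; apply: C_iter; apply: HC.
have [N0 HN0] := @C_seq _ HC1 _ e0.
set Nn := (p N0).+1.
have small : forall h, h \in H -> `|iter Nn T h| < e.
  move=> h hH; rewrite /Nn -addn1 iterD; apply: (HN0 N0) => //.
  by apply: map_f.
have step : forall r, Msum H (r + Nn) <= (1 + Msum H r) / 2.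
  move=> r; rewrite /Msum big_seq.
  apply: (le_trans (y := \sum_(h <- H) ((2 * (n.+1)%:R)^-1 * (1 + Msum H r)))).
    rewrite [X in _ <= X]big_seq; apply: ler_sum => h hH; rewrite iterD.
    apply: (le_trans (dom _ _ (C_iter _ _ (HC _ hH)))).
    apply: ler_wpM2r; first by apply: addr_ge0; [exact: ler01 | exact: Msum_ge0].
    have -> : (2 * (n.+1)%:R)^-1 = k0 * e.
      by rewrite /e /k0; field; rewrite (gt_eqF eta0) (gt_eqF L0) nat1r pnatr_eq0.
    by apply: ler_wpM2l; [exact: ltW | exact: ltW (small _ hH)].
  rewrite sum_const_seq -/n -/(Msum H r) -[_ *+ n]mulr_natl mulrA [X in _ <= X]mulrC.
  apply: ler_wpM2r; first by apply: addr_ge0; [exact: ler01 | exact: Msum_ge0].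
  rewrite invfM mulrCA -[X in _ <= X]mulr1; apply: ler_wpM2l; first by rewrite invr_ge0 ler0n.
  by rewrite ler_pdivrMr ?ltr0n // mul1r ler_nat.
pose Bd := 1 + \sum_(i < Nn) Msum H i.
have Bd1 : 1 <= Bd by rewrite lerDl sumr_ge0 // => i _; exact: Msum_ge0.
have bnd : forall r, Msum H r <= Bd.
  elim/ltn_ind => r IH.
  case: (ltnP r Nn) => hr.
    apply: (le_trans (@sum_term_le (fun k => Msum H k) Nn r (fun k => Msum_ge0 H k) hr)).
    by rewrite /Bd lerDr.
  rewrite -(subnK hr); apply: (le_trans (step _)).
  have := IH (r - Nn)%N; rewrite ltn_subrL /Nn ltn0Sn /= => /(_ (leq_trans (ltn0Sn _) hr)) hle.
  rewrite ler_pdivrMr ?ltr0n //.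
  apply: (le_trans (y := 1 + Bd)); first by rewrite lerD2l.
  by rewrite mulr_natr mulr2n lerD2r.
have bz : forall r, `|iter r T z0| <= k0 * `|z0| * (1 + Bd).
  move=> r; apply: (le_trans (dom r z0 Cz0)); apply: ler_wpM2l.
    by apply: mulr_ge0; [exact: ltW | exact: normr_ge0].
  by rewrite lerD2l.
have [|m hm] := z0unb (k0 * `|z0| * (1 + Bd)).
  apply: ger0_real; apply: mulr_ge0; first by apply: mulr_ge0; [exact: ltW | exact: normr_ge0].
  by apply: addr_ge0; [exact: ler01 | exact: le_trans Bd1].
by have := lt_le_trans hm (bz m); rewrite ltxx.
Qed.
Variable x : nat -> X.
Hypothesis Cx : forall k, Cset (x k).
Variable w : nat -> K.
Hypothesis w_pos : forall k, 0 < w k.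
Hypothesis w_le1 : forall k, w k <= 1.

Definition kap (j : nat) := logn 2 j.+1.

Definition Hs (s : seq (X * nat * nat)) :=
  [seq x k | k <- iota 0 (size s).+1] ++ [seq u.1.1 | u <- s].

Definition Pstep (s : seq (X * nat * nat)) (t : X * nat * nat) : Prop :=
  [/\ Cset t.1.1,
   `|t.1.1| <= (2 ^+ (size s).+1)^-1 * w (kap (size s)) /
                 (1 + \sum_(u <- s) (c ^+ u.1.2 + c ^+ u.2)),
   (size s).+1%:R * (1 + Msum (Hs s) t.1.2) <= `|iter t.1.2 T t.1.1|,
   (size s <= t.2)%N &
   forall h, h \in rcons (Hs s) t.1.1 -> `|iter t.2 T h| <= (((size s).+2)%:R ^+ 2)^-1 ].

Lemma step_ex s : (forall u, u \in s -> Cset u.1.1) -> exists t, Pstep s t.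
Proof.
move=> hs; set j := size s.
have HC : forall h, h \in Hs s -> Cset h.
  move=> h; rewrite mem_cat => /orP [/mapP [k _ ->] //|/mapP [u us ->]].
  exact: hs.
have den0 : 0 < 1 + \sum_(u <- s) (c ^+ u.1.2 + c ^+ u.2).
  rewrite ltr_pwDl // sumr_ge0 // => u _.
  by rewrite addr_ge0 // exprn_ge0.
have eta0 : 0 < (2 ^+ j.+1)^-1 * w (kap j) / (1 + \sum_(u <- s) (c ^+ u.1.2 + c ^+ u.2)).
  by rewrite divr_gt0 // mulr_gt0 // invr_gt0 exprn_gt0.
have [r [g [Cg ng hg]]] := @RL _ HC _ _ (ltr0Sn _ j) eta0.
have HC2 : forall h, h \in map (iter j T) (rcons (Hs s) g) -> Cset h.
  move=> h /mapP [h1]; rewrite mem_rcons in_cons => /orP [/eqP -> ->|h1H ->].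
    exact: C_iter.
  by apply: C_iter; apply: HC.
have e0 : 0 < ((j.+2)%:R ^+ 2)^-1 :> K by rewrite invr_gt0 exprn_gt0 // ltr0Sn.
have [N HN] := @C_seq _ HC2 _ e0.
exists (g, r, (p N + j)%N); split => //=.
- exact: leq_addl.
- move=> h hh; rewrite iterD; apply/ltW; apply: (HN N) => //.
  exact: map_f.
Qed.

Lemma step_ex2 s : exists t, (forall u, u \in s -> Cset u.1.1) -> Pstep s t.
Proof.
case: (pselect (forall u, u \in s -> Cset u.1.1)) => [h|nh].
  by have [t ht] := @step_ex s h; exists t.
by exists (0, 0%N, 0%N) => h; case: nh.
Qed.

Definition step s := proj1_sig (cid (step_ex2 s)).

Lemma stepP s : (forall u, u \in s -> Cset u.1.1) -> Pstep s (step s).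
Proof. exact: (proj2_sig (cid (step_ex2 s))). Qed.

Fixpoint st j := if j is j'.+1 then rcons (st j') (step (st j')) else [::].

Lemma st_map j : st j = [seq step (st i) | i <- iota 0 j].
Proof.
elim: j => [//|j IH].
have E : iota 0 j.+1 = iota 0 j ++ [:: j] by rewrite -addn1 iotaD.
by rewrite E map_cat /= -IH cats1.
Qed.

Lemma st_size j : size (st j) = j.
Proof. by rewrite st_map size_map size_iota. Qed.

Definition G j := (step (st j)).1.1.
Definition Rt j := (step (st j)).1.2.
Definition Mt j := (step (st j)).2.

Lemma stP j : Pstep (st j) (step (st j)).
Proof.
elim/ltn_ind: j => j IH; apply: stepP => u.
rewrite st_map => hu; case: (mapP hu) => i0; rewrite mem_iota add0n => /andP [_ ij] ->.
by have [] := IH i0 ij.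
Qed.


Definition Sm i := \sum_(0 <= i' < i) (c ^+ Rt i' + c ^+ Mt i').
Definition HH j := [seq x k | k <- iota 0 j.+1] ++ [seq G i | i <- iota 0 j].

Lemma Hs_st j : Hs (st j) = HH j.
Proof. by rewrite /Hs st_size /HH {1}st_map -map_comp. Qed.

Lemma sum_st j : \sum_(u <- st j) (c ^+ u.1.2 + c ^+ u.2) = Sm j.
Proof. by rewrite st_map big_map /Sm /index_iota subn0. Qed.

Lemma P1 j : Cset (G j).
Proof. by have [] := stP j. Qed.

Lemma P2 j : `|G j| <= (2 ^+ j.+1)^-1 * w (kap j) / (1 + Sm j).
Proof. by have [_ + _ _ _] := stP j; rewrite st_size sum_st. Qed.

Lemma P3 j : j.+1%:R * (1 + Msum (HH j) (Rt j)) <= `|iter (Rt j) T (G j)|.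
Proof. by have [_ _ + _ _] := stP j; rewrite st_size Hs_st. Qed.

Lemma P4a j : (j <= Mt j)%N.
Proof. by have [_ _ _ + _] := stP j; rewrite st_size. Qed.

Lemma P4b j h : h \in rcons (HH j) (G j) -> `|iter (Mt j) T h| <= ((j.+2)%:R ^+ 2)^-1.
Proof. by have [_ _ _ _ +] := stP j; rewrite st_size Hs_st; apply. Qed.

Lemma Sm_ge0 i : 0 <= Sm i.
Proof. by apply: sumr_ge0 => i' _; rewrite addr_ge0 // exprn_ge0. Qed.

Lemma Sm_mono N i : (N <= i)%N -> Sm N <= Sm i.
Proof.
move=> hN; rewrite /Sm (big_cat_nat (leq0n N) hN) /= lerDl.
by apply: sumr_ge0 => i' _; rewrite addr_ge0 // exprn_ge0.
Qed.

Lemma term_le_Sm l N : (l < N)%N -> c ^+ Rt l + c ^+ Mt l <= Sm N.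
Proof.
move=> lN; rewrite /Sm big_mkord.
apply: (@sum_term_le (fun i => c ^+ Rt i + c ^+ Mt i) N l) => // k.
by rewrite addr_ge0 // exprn_ge0.
Qed.

Lemma G_tail t N i : c ^+ t <= 1 + Sm N -> (N <= i)%N ->
  `|iter t T (G i)| <= (2 ^+ i.+1)^-1 * w (kap i).
Proof.
move=> ht hi; apply: (le_trans (iter_bound _ _)).
have d0 : 0 < 1 + Sm i by rewrite ltr_pwDl // Sm_ge0.
apply: (le_trans (ler_wpM2l (exprn_ge0 _ c_ge0) (P2 i))).
apply: (le_trans (y := (1 + Sm i) * ((2 ^+ i.+1)^-1 * w (kap i) / (1 + Sm i)))).
  apply: ler_wpM2r.
    by rewrite divr_ge0 ?mulr_ge0 ?ltW ?invr_gt0 ?exprn_gt0.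
  by apply: (le_trans ht); rewrite lerD2l Sm_mono.
by rewrite mulrCA mulfV ?gt_eqF // mulr1.
Qed.

Definition Gk k i := if kap i == k then G i else 0.
Definition Pk k N := x k + \sum_(0 <= i < N) Gk k i.

Lemma geo N d : \sum_(N <= i < N + d) (2 ^+ i.+1)^-1 = (2 ^+ N)^-1 - (2 ^+ (N + d))^-1 :> K.
Proof.
elim: d => [|d IH]; first by rewrite addn0 big_geq // subrr.
rewrite addnS big_nat_recr ?leq_addr //= IH exprS.
have h2 : (2 : K) != 0 by rewrite pnatr_eq0.
have ha : (2 ^+ (N + d) : K) != 0 by rewrite expf_neq0.
by field; rewrite ha expf_neq0.
Qed.

Lemma geo_le N N' : (N <= N')%N -> \sum_(N <= i < N') (2 ^+ i.+1)^-1 <= (2 ^+ N)^-1 :> K.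
Proof.
move=> hN; rewrite -(subnKC hN) geo lerBlDr lerDl.
by rewrite invr_ge0 exprn_ge0.
Qed.

Lemma Pk_tail k t N N' : c ^+ t <= 1 + Sm N -> (N <= N')%N ->
  `|iter t T (Pk k N' - Pk k N)| <= w k * (2 ^+ N)^-1.
Proof.
move=> ht hN.
have -> : Pk k N' - Pk k N = \sum_(N <= i < N') Gk k i.
  rewrite /Pk (big_cat_nat (leq0n N) hN) /=.
  by apply/eqP; rewrite subr_eq [X in _ == X]addrCA [X in _ == _ + X]addrC.
rewrite iter_sum; apply: (le_trans (ler_norm_sum _ _ _)).
apply: (le_trans (y := \sum_(N <= i < N') w k * (2 ^+ i.+1)^-1)).
  rewrite big_nat_cond [X in _ <= X]big_nat_cond; apply: ler_sum => i /andP [/andP [hi _] _].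
  rewrite /Gk; case: eqP => [<-|_].
    by rewrite mulrC; apply: G_tail ht hi.
  by rewrite iter0 normr0 mulr_ge0 ?ltW ?invr_ge0 ?exprn_ge0.
by rewrite -mulr_sumr; apply: ler_wpM2l; [exact: ltW | exact: geo_le].
Qed.
Hypothesis archi : forall y : K, y \is Num.real -> exists n : nat, y < n%:R.
Arguments archi {y}.

Lemma pow2_small (eps : K) : 0 < eps -> exists N, (2 ^+ N)^-1 < eps.
Proof.
move=> e0; have ie0 : 0 < eps^-1 by rewrite invr_gt0.
have [n hn] := archi (gtr0_real ie0 : eps^-1 \is Num.real).
exists n.
have h2 : eps^-1 < 2 ^+ n.
  by apply: (lt_le_trans hn); rewrite -natrX ler_nat ltnW // ltn_expl.
by rewrite -(invrK eps) ltf_pV2 // posrE ?exprn_gt0 ?invr_gt0 //.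
Qed.

Lemma nearinfty (P : nat -> Prop) : (\forall n \near \oo, P n) <-> exists N, forall n, (N <= n)%N -> P n.
Proof.
split.
- move=> [N _ HN]; exists N => n hn; exact: HN.
- move=> [N HN]; exists N => // n; exact: HN.
Qed.

Lemma lim_bound (u : nat -> X) l t b : u @ \oo --> l ->
  (exists N, forall n, (N <= n)%N -> `|iter t T (u n)| <= b) -> `|iter t T l| <= b.
Proof.
move=> ul [N HN]; apply/ler_addgt0Pr => e e0.
have a1 : 0 <= c ^+ t by rewrite exprn_ge0.
have e1 : 0 < e / (c ^+ t + 1) by rewrite divr_gt0 // ltr_wpDl.
have [N2 HN2] := (nearinfty _).1 ((cvgrPdist_lt _ _).1 ul _ e1).
set n := maxn N N2.
have -> : iter t T l = iter t T (l - u n) + iter t T (u n) by rewrite -iterD' subrK.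
apply: (le_trans (ler_normD _ _)); rewrite addrC; apply: lerD.
  by apply: HN; rewrite leq_maxl.
apply: (le_trans (iter_bound _ _)).
rewrite -[X in _ <= X](@pos_div_mul _ e a1 e0) mulrDl mul1r.
apply: ler_wpDr; first by apply/ltW.
by apply: ler_wpM2l => //; apply/ltW/HN2; rewrite leq_maxr.
Qed.

Lemma Pk_cvg k : cvg (Pk k @ \oo).
Proof.
suff : cauchy (Pk k @ \oo) by exact: cauchy_cvg.
apply: cauchy_exP => eps e0.
have [N hN] := @pow2_small eps e0.
exists (Pk k N); apply/nearinfty; exists N => n hn.
rewrite -ball_normE /ball_ /= distrC.
apply: le_lt_trans hN.
have := @Pk_tail k 0%N N n; rewrite expr0 lerDl Sm_ge0 => /(_ isT hn) /le_trans; apply.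
by rewrite ler_piMl ?invr_ge0 ?exprn_ge0.
Qed.

Definition yv k := lim (Pk k @ \oo).

Lemma yv_tail k t N : c ^+ t <= 1 + Sm N ->
  `|iter t T (yv k - Pk k N)| <= w k * (2 ^+ N)^-1.
Proof.
move=> ht; apply: (@lim_bound (fun n => Pk k n - Pk k N)).
  by apply: cvgB; [exact: Pk_cvg | exact: cvg_cst].
by exists N => n hn; apply: Pk_tail.
Qed.
Lemma kap_inf k N : exists j, (N <= j)%N /\ kap j = k.
Proof.
have hp : (0 < 2 ^ k * (N.*2.+1))%N by rewrite muln_gt0 expn_gt0.
exists (2 ^ k * (N.*2.+1)).-1; rewrite /kap prednK //; split.
  have : (1 <= 2 ^ k)%N by rewrite expn_gt0.
  move=> h; rewrite -ltnS prednK //.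
  apply: (@leq_trans (N.*2.+1)); first by rewrite ltnS -addnn leq_addr.
  by rewrite leq_pmull.
rewrite lognM ?expn_gt0 // pfactorK // logn_coprime ?addn0 //.
by rewrite coprime2n /= odd_double.
Qed.

Lemma Pk0 k : Pk k 0 = x k.
Proof. by rewrite /Pk big_geq // addr0. Qed.

Lemma PkS k N : Pk k N.+1 = Pk k N + Gk k N.
Proof. by rewrite /Pk big_nat_recr //= addrA. Qed.

Lemma yv_near k : `|yv k - x k| <= w k.
Proof.
have := @yv_tail k 0%N 0%N; rewrite expr0 lerDl Sm_ge0 Pk0 expr0 invr1 mulr1.
by apply.
Qed.

Lemma Pk_bound k N t : `|iter t T (Pk k N)| <=
  `|iter t T (x k)| + \sum_(0 <= l < N) `|iter t T (G l)|.
Proof.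
rewrite /Pk iterD'; apply: (le_trans (ler_normD _ _)); rewrite lerD2l.
rewrite iter_sum; apply: (le_trans (ler_norm_sum _ _ _)); apply: ler_sum => l _.
by rewrite /Gk; case: eqP => _ //; rewrite iter0 normr0.
Qed.

Definition Yset (y : X) := exists (n : nat) (a : nat -> K), y = \sum_(k < n) a k *: yv k.

Lemma widen_sum (a : nat -> K) m n : (m <= n)%N ->
  \sum_(k < n) (if (k < m)%N then a k else 0) *: yv k = \sum_(k < m) a k *: yv k.
Proof.
move=> hmn; rewrite (big_ord_widen n (fun k => a k *: yv k) hmn) [RHS]big_mkcond /=.
by apply: eq_bigr => k _; case: ifP => _ //; rewrite scale0r.
Qed.

Lemma Y_sub : Yset 0 /\ forall (a : K) u v, Yset u -> Yset v -> Yset (a *: u + v).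
Proof.
split; first by exists 0%N, (fun _ => 0); rewrite big_ord0.
move=> a u v [n1 [a1 ->]] [n2 [a2 ->]].
exists (n1 + n2)%N, (fun k => a * (if (k < n1)%N then a1 k else 0) + (if (k < n2)%N then a2 k else 0)).
rewrite -(@widen_sum a1 _ _ (leq_addr n2 n1)) -(@widen_sum a2 _ _ (leq_addl n1 n2)).
rewrite scaler_sumr -big_split /=; apply: eq_bigr => k _.
by rewrite scalerDl scalerA.
Qed.
Lemma norm_comb (n : nat) (a : nat -> K) (v : nat -> X) t :
  `|iter t T (\sum_(k < n) a k *: v k)| <= \sum_(k < n) `|a k| * `|iter t T (v k)|.
Proof.
rewrite iter_sum; apply: (le_trans (ler_norm_sum _ _ _)); apply: ler_sum => k _.
by rewrite iterZ normrZ.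
Qed.

Lemma mem_x i k : (k <= i)%N -> x k \in rcons (HH i) (G i).
Proof.
move=> ki; rewrite mem_rcons in_cons mem_cat; apply/orP; right; apply/orP; left.
by apply: map_f; rewrite mem_iota add0n ltnS ki.
Qed.

Lemma mem_G i l : (l <= i)%N -> G l \in rcons (HH i) (G i).
Proof.
rewrite leq_eqVlt => /orP [/eqP ->|li]; first by rewrite mem_rcons mem_head.
rewrite mem_rcons in_cons mem_cat; apply/orP; right; apply/orP; right.
by apply: map_f; rewrite mem_iota add0n li.
Qed.

Lemma cM_le i : c ^+ Mt i <= 1 + Sm i.+1.
Proof.
apply: (le_trans (y := Sm i.+1)); last by rewrite ?lerDr ?lerDl ler01.
apply: (le_trans _ (@term_le_Sm i i.+1 (ltnSn i))).
by rewrite lerDr exprn_ge0.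
Qed.

Lemma cR_le j : c ^+ Rt j <= 1 + Sm j.+1.
Proof.
apply: (le_trans (y := Sm j.+1)); last by rewrite ?lerDr ?lerDl ler01.
apply: (le_trans _ (@term_le_Sm j j.+1 (ltnSn j))).
by rewrite lerDl exprn_ge0.
Qed.

Lemma inv_pow2_le i : (2 ^+ i.+1)^-1 <= (i.+2%:R)^-1 :> K.
Proof.
rewrite lef_pV2 ?posrE ?exprn_gt0 ?ltr0n //.
by rewrite -natrX ler_nat ltn_expl.
Qed.

Lemma Y_liminf (n : nat) (a : nat -> K) e : 0 < e -> forall N0,
  exists2 m, (N0 <= m)%N & `|iter m T (\sum_(k < n) a k *: yv k)| < e.
Proof.
move=> e0 N0.
set A := \sum_(k < n) `|a k|.
have A0 : 0 <= A by apply: sumr_ge0 => k _.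
have [n0 hn0] := archi (ger0_real (divr_ge0 (mulr_ge0 (ler0n K 2) A0) (ltW e0)) : 2%:R * A / e \is Num.real).
set i := maxn (maxn N0 n) n0.
exists (Mt i).
  apply: (leq_trans _ (P4a i)); apply: (leq_trans (leq_maxl N0 n)); exact: leq_maxl.
set eps := ((i.+2)%:R ^+ 2)^-1 : K.
have key : forall k, (k < n)%N -> `|iter (Mt i) T (yv k)| <= 2 * (i.+2%:R)^-1.
  move=> k kn.
  have ki : (k <= i)%N.
    apply: ltnW; apply: (leq_trans kn); apply: (leq_trans (leq_maxr N0 n)); exact: leq_maxl.
  have -> : yv k = Pk k i.+1 + (yv k - Pk k i.+1) by rewrite addrC subrK.
  rewrite iterD'; apply: (le_trans (ler_normD _ _)); rewrite mulr2n mulrDl mul1r.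
  apply: lerD.
    apply: (le_trans (Pk_bound _ _ _)).
    apply: (le_trans (y := eps + eps *+ i.+1)).
      apply: lerD; first exact: P4b _ _ (mem_x _ _ ki).
      rewrite -(subn0 i.+1) -sumr_const_nat big_nat_cond [X in _ <= X]big_nat_cond.
      apply: ler_sum => l /andP [/andP [_ li] _]; apply: P4b; apply: mem_G; by rewrite subn0 in li.
    rewrite -mulrS /eps -mulr_natl.
    have h : (i.+2%:R : K) != 0 by rewrite pnatr_eq0.
    by rewrite le_eqVlt; apply/orP; left; apply/eqP; field.
  apply: (le_trans (@yv_tail k (Mt i) i.+1 (cM_le i))).
  apply: (le_trans _ (inv_pow2_le i)).
  by rewrite ler_piMl ?invr_ge0 ?exprn_ge0.
apply: (le_lt_trans (norm_comb _ _ _ _)).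
apply: (le_lt_trans (y := A * (2 * (i.+2%:R)^-1))).
  rewrite /A mulr_suml; apply: ler_sum => k _; apply: ler_wpM2l => //.
  exact: key.
have hi : (n0 <= i.+2)%N by apply: (leq_trans (leq_maxr (maxn N0 n) n0)); rewrite -/i ltnW.
rewrite mulrA ltr_pdivrMr ?ltr0n //.
rewrite -ltr_pdivrMl // mulrC [A * 2]mulrC; apply: (lt_le_trans hn0).
by rewrite ler_nat.
Qed.
Lemma Msum_HH j t : Msum (HH j) t =
  \sum_(k < j.+1) `|iter t T (x k)| + \sum_(0 <= l < j) `|iter t T (G l)|.
Proof.
rewrite /Msum /HH big_cat !big_map.
by rewrite -(big_mkord xpredT (fun k => `|iter t T (x k)|)) /index_iota !subn0.
Qed.

Lemma Pk_le_Msum k j t : (k <= j)%N -> `|iter t T (Pk k j)| <= Msum (HH j) t.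
Proof.
move=> kj; apply: (le_trans (Pk_bound _ _ _)); rewrite Msum_HH lerD2r.
by apply: (@sum_term_le (fun k => `|iter t T (x k)|) j.+1 k) => //.
Qed.

Lemma Y_unb (n : nat) (a : nat -> K) : \sum_(k < n) a k *: yv k != 0 ->
  forall M : K, M \is Num.real -> exists t, M < `|iter t T (\sum_(k < n) a k *: yv k)|.
Proof.
move=> y0 M Mr.
have [ks hks] : exists ks : 'I_n, a ks != 0.
  case: (pselect (exists ks : 'I_n, a ks != 0)) => // nh.
  case/negP: y0; apply/eqP; apply: big1 => k _.
  have -> : a k = 0 by apply/eqP; apply: contrapT => hk; apply: nh; exists k; apply/negP.
  by rewrite scale0r.
set al := `|a ks|.
have al0 : 0 < al by rewrite normr_gt0.
set A := \sum_(k < n) `|a k|.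
have A0 : 0 <= A by apply: sumr_ge0 => k _.
set Q := `|M| + A + A + 1.
have Q0 : 0 <= Q by rewrite !addr_ge0.
have [n0 hn0] := archi (ger0_real (divr_ge0 Q0 (ltW al0)) : Q / al \is Num.real).
have [j [hj kj]] := kap_inf ks (maxn n n0).
have nj : (n <= j)%N by apply: leq_trans hj; rewrite leq_maxl.
exists (Rt j).
set t := Rt j.
set Ms := Msum (HH j) t.
have Ms0 : 0 <= Ms by apply: Msum_ge0.
have E : iter t T (\sum_(k < n) a k *: yv k) = a ks *: iter t T (G j) +
   (\sum_(k < n) a k *: iter t T (Pk k j) + \sum_(k < n) a k *: iter t T (yv k - Pk k j.+1)).
  have -> : a ks *: iter t T (G j) = \sum_(k < n) a k *: iter t T (Gk k j).
    rewrite (bigD1 ks) //= big1 ?addr0.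
      by rewrite /Gk kj eqxx.
    move=> k kks; rewrite /Gk kj; case: eqP => [hk|_]; last by rewrite iter0 scaler0.
    by move: kks; rewrite -(inj_eq val_inj) /= hk eqxx.
  rewrite iter_sum -!big_split; apply: eq_bigr => k _ /=.
  rewrite iterZ -!scalerDr -!iterD'; congr (_ *: iter t T _).
  by rewrite PkS addrA [Gk k j + _]addrC addrC subrK.
have B1 : `|\sum_(k < n) a k *: iter t T (Pk k j)| <= A * Ms.
  apply: (le_trans (ler_norm_sum _ _ _)); rewrite /A mulr_suml.
  apply: ler_sum => k _; rewrite normrZ ler_wpM2l //.
  apply: Pk_le_Msum; apply: ltnW; apply: leq_trans nj; exact: ltn_ord.
have B2 : `|\sum_(k < n) a k *: iter t T (yv k - Pk k j.+1)| <= A.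
  apply: (le_trans (ler_norm_sum _ _ _)); rewrite /A.
  apply: ler_sum => k _; rewrite normrZ -[X in _ <= X]mulr1 ler_wpM2l //.
  apply: (le_trans (@yv_tail k t j.+1 (cR_le j))).
  apply: (le_trans (y := (2 ^+ j.+1)^-1)).
    by rewrite ler_piMl ?invr_ge0 ?exprn_ge0.
  by rewrite invf_le1 ?exprn_gt0 // exprn_ege1 // ler1n.
have B3 := P3 j; rewrite -/t -/Ms in B3.
have hQ : Q <= al * j.+1%:R.
  rewrite mulrC -ler_pdivrMr //; apply: ltW; apply: (lt_le_trans hn0).
  rewrite ler_nat; apply: leq_trans (ltnW (ltnSn _)); apply: leq_trans hj.
  exact: leq_maxr.
have h1 : Q * (1 + Ms) <= `|iter t T (\sum_(k < n) a k *: yv k)| + (A * Ms + A).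
  apply: (le_trans (y := al * (j.+1%:R * (1 + Ms)))).
    by rewrite mulrA ler_wpM2r // addr_ge0.
  apply: (le_trans (y := `|a ks *: iter t T (G j)|)).
    by rewrite normrZ ler_wpM2l // ltW.
  have -> : a ks *: iter t T (G j) = iter t T (\sum_(k < n) a k *: yv k) -
     (\sum_(k < n) a k *: iter t T (Pk k j) + \sum_(k < n) a k *: iter t T (yv k - Pk k j.+1)).
    by rewrite E addrK.
  apply: (le_trans (ler_normB _ _)); rewrite lerD2l.
  by apply: (le_trans (ler_normD _ _)); apply: lerD.
rewrite -lerBlDr in h1.
apply: (lt_le_trans _ h1).
have -> : Q * (1 + Ms) - (A * Ms + A) = (`|M| + A + 1) + (`|M| + A + 1) * Ms.
  by rewrite /Q; ring.
apply: (le_lt_trans (real_ler_norm Mr)).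
apply: ltr_wpDr; first by rewrite mulr_ge0 // !addr_ge0.
by rewrite -addrA ltrDl (ltr_wpDl A0 ltr01).
Qed.
Lemma Y_yv k : Yset (yv k).
Proof.
exists k.+1, (fun i => if i == k then 1 else 0).
rewrite big_ord_recr /= eqxx scale1r big1 ?add0r // => i _.
by rewrite (ltn_eqF (ltn_ord i)) scale0r.
Qed.

Lemma Y_limsup y : Yset y -> y != 0 -> forall M : K, M \is Num.real ->
  forall N, exists2 n, (N <= n)%N & M < `|iter n T y|.
Proof.
move=> [n [a ->]] y0 M Mr N.
set yy := \sum_(k < n) a k *: yv k.
set S := \sum_(m < N) `|iter m T yy|.
have S0 : 0 <= S by apply: sumr_ge0.
have [t ht] := @Y_unb n a y0 _ (realD (normr_real M) (ger0_real S0)).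
case: (ltnP t N) => htN.
  have := @sum_term_le (fun m => `|iter m T yy|) N t (fun m => normr_ge0 _) htN.
  rewrite -/S => hle.
  have : `|M| + S < S by apply: lt_le_trans ht hle.
  by rewrite gtrDr normr_lt0.
exists t => //; apply: le_lt_trans ht.
apply: (le_trans (real_ler_norm Mr)); by rewrite lerDl.
Qed.

Lemma core_thm : exists (Y : set X) (yy : nat -> X),
  [/\ forall k, Y (yy k), forall k, `|yy k - x k| <= w k,
      Y 0 /\ (forall (a : K) u v, Y u -> Y v -> Y (a *: u + v)) &
      forall y, Y y -> y <> 0 ->
       (forall e : K, 0 < e -> forall N : nat, exists2 n : nat, (N <= n)%N & `|iter n T y| < e) /\
       (forall M : K, M \is Num.real -> forall N : nat, exists2 n : nat, (N <= n)%N & M < `|iter n T y|)].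
Proof.
exists Yset, yv; split.
- exact: Y_yv.
- exact: yv_near.
- exact: Y_sub.
- move=> y Yy y0; split; last by apply: Y_limsup => //; apply/eqP.
  by move: Yy => [n [a ->]] e e0 N; apply: Y_liminf.
Qed.

End Core.
Lemma inv_nat_small (K : numFieldType)
  (archi : forall y : K, y \is Num.real -> exists n : nat, y < n%:R) (e : K) :
  0 < e -> exists m : nat, (m.+1%:R)^-1 < e.
Proof.
move=> e0; have ie0 : 0 < e^-1 by rewrite invr_gt0.
have [n hn] := archi _ (gtr0_real ie0).
exists n; rewrite -(invrK e) ltf_pV2 ?posrE ?ltr0n //.
by apply: (lt_trans hn); rewrite ltr_nat.
Qed.

Lemma main_gen (K : numFieldType) (X : completeNormedModType K) (T : {linear X -> X})
  (archi : forall y : K, y \is Num.real -> exists n : nat, y < n%:R) :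
  separable_space X -> continuous T -> densely_unif_LY_chaotic T ->
  exists Y : set X, dense Y /\ irregular_manifold T Y.
Proof.
move=> [D [cD dD]] hcont [S [dS [ncS [[x1 [y1 [Sx1 [Sy1 x1y1]]]] [p [q hpq]]]]]].
have [c c0 Tb] : exists2 c : K, 0 <= c & forall x, `|T x| <= c * `|x|.
  have := (linear_boundedP T).1 ((linear_bounded_continuous T).2 hcont).
  by move=> /pinfty_ex_gt0 [M M0 HM]; exists M => //; exact: ltW.
have Cdiff : forall u v, S u -> S v -> Cset K X T p (u - v).
  move=> u v Su Sv; have [->|uv] := eqVneq u v; first by rewrite subrr; exact: (C0 K X T p).
  have [h _] := hpq u v Su Sv (elimN eqP uv).
  move=> e e0; have := (cvgr0Pnorm_lt _).1 h e e0.
  move=> hn0; have [N HN] := (nearinfty _).1 (hn0 _); exists N => n hn; rewrite (iterB K X T).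
  by have := HN n hn; rewrite normr_id.
pose z0 := x1 - y1.
have Cz0 : Cset K X T p z0 by apply: Cdiff.
have z0unb : forall M : K, M \is Num.real -> exists n, M < `|iter n T z0|.
  move=> M Mr; have [_ hq] := hpq x1 y1 Sx1 Sy1 x1y1.
  have : ((fun n => `|iter (q n) T x1 - iter (q n) T y1|) @ \oo) [set y | M < y].
    by apply: hq; exists M; split.
  move=> hn0; have [N HN] := (nearinfty _).1 hn0; exists (q N); rewrite /z0 (iterB K X T); exact: HN N (leqnn N).
have Cdense : forall d (e : K), 0 < e -> exists c, Cset K X T p c /\ `|c - d| < e.
  move=> d e e0.
  have [s [Bs Ss]] := dS (ball (d + x1) e) (ex_intro _ (d + x1) (ballxx _ e0)) (ball_open _ _).
  exists (s - x1); split; first exact: Cdiff.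
  move: Bs; rewrite -ball_normE /ball_ /= => h.
  have -> : s - x1 - d = - ((d + x1) - s) by rewrite [LHS]addrAC opprB opprD addrA.
  by rewrite normrN.
have [g hg] : exists g : nat -> X, forall z (e : K), 0 < e -> exists i, `|g i - z| < e.
  have /pcard_surjP [g sg] := cD.
  exists g => z e e0.
  have [v [Bv Dv]] := dD (ball z e) (ex_intro _ z (ballxx _ e0)) (ball_open _ _).
  have [i _ gi] := sg v Dv; exists i; rewrite gi.
  by move: Bv; rewrite -ball_normE /ball_ /= distrC.
pose code k := odflt (0%N, 0%N) (@unpickle (prod nat nat) k).
pose w k := ((code k).2.+1%:R : K)^-1.
have wpos : forall k, 0 < w k by move=> k; rewrite invr_gt0 ltr0n.
have wle1 : forall k, w k <= 1 by move=> k; rewrite invf_le1 ?ltr0n // ler1n.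
have exx : forall k, exists c, Cset K X T p c /\ `|c - g (code k).1| < w k.
  by move=> k; apply: Cdense.
pose x k := proj1_sig (cid (exx k)).
have Cx : forall k, Cset K X T p (x k) by move=> k; exact: (proj2_sig (cid (exx k))).1.
have hx : forall k, `|x k - g (code k).1| < w k by move=> k; exact: (proj2_sig (cid (exx k))).2.
have [Y [yy [Yyy hyy [Y0 Ylin] Yirr]]] :=
  @core_thm K X T c c0 Tb p z0 Cz0 z0unb x Cx w wpos wle1 archi.
exists Y; split; last first.
  split; first by split.
  by move=> y Yy y0; apply: Yirr.
move=> O [z Oz] oO.
have [e e0 Be] := (nbhs_ballP z O).1 (open_nbhs_nbhs (conj oO Oz)).
have e3 : 0 < e / 3 by rewrite divr_gt0 // ltr0n.
have [i hi] := hg z _ e3.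
have [m hm] := @inv_nat_small K archi _ e3.
set k := pickle (i, m).
have ck : code k = (i, m) by rewrite /code /k pickleK.
exists (yy k); split => //; apply: Be.
rewrite -ball_normE /ball_ /= distrC.
have -> : yy k - z = (yy k - x k) + ((x k - g i) + (g i - z)).
  by rewrite !addrA subrK subrK.
apply: (le_lt_trans (ler_normD _ _)).
have he : e / 3 + (e / 3 + e / 3) = e.
  by field.
rewrite -he; apply: ler_ltD.
  apply: (le_trans (hyy k)); apply: ltW; by rewrite /w ck.
apply: (le_lt_trans (ler_normD _ _)); apply: ltrD => //.
by have := hx k; rewrite ck /= => /lt_trans; apply; rewrite /w ck.
Qed.

Theorem corollary3p6 (R : realType) (k : scalar_kind)
  (X : completeNormedModType (scalars R k))
  (T : {linear X -> X}) :
  separable_space X ->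
  continuous T ->
  densely_unif_LY_chaotic T ->
  exists Y : set X, dense Y /\ irregular_manifold T Y.
Proof.
apply: main_gen.
case: k X T => /= X T y yr.
  exists (Num.bound `|y|); apply: le_lt_trans (real_ler_norm yr) _.
  exact: archi_boundP.
have [r ->] := complex_realP _ yr.
exists (Num.bound `|r|).
rewrite -(rmorph_nat (@real_complex R)) ltcR.
by apply: le_lt_trans (ler_norm r) _; exact: archi_boundP.
Qed.
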